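(* Let $T>0$. Define $\lambda(T)$ by $$\lambda(T)=\begin{cases}\dfrac{-q+\sqrt{q^2-4pr}}{2p} & \text{if } w^*_b\neq\tfrac12,\\[2mm] \dfrac{4\sum_{i\in\mathcal{K}'}I_i\log I_i+T+S}{2\sum_{i\in\mathcal{K}'}I_i} & \text{if } w^*_b=\tfrac12,\end{cases}$$ (where in the first case it is assumed that $q^2-4pr\ge0$), and define $W(T)=(W_1(T),\dots,W_k(T))$ by $W_i(T)=w^*_i\,\frac{\lambda(T)-2\log I_i}{1+T/S}$ for $i\in\mathcal{K}'$ and $W_b(T)=\sigma_b\sqrt{\sum_{i\in\mathcal{K}'}W_i(T)^2/\sigma_i^2}$. Let $I_{\max}=\max_{i\in\mathcal{K}'}I_i$ and $$T_1=2\sum_{i\in\mathcal{K}'}\Big[\frac{\sigma_b^2I_i^2}{\sigma_i^2(S-I_b)}-I_i\Big]\log\frac{I_{\max}}{I_i}-S,$$ $$T_2=2\sum_{i\in\mathcal{K}'}I_i\log\frac{I_{\max}}{I_i}+2\sigma_b\sqrt{\sum_{i\in\mathcal{K}'}\frac{I_i^2}{\sigma_i^2}\Big(\log\frac{I_{\max}}{I_i}\Big)^2}-S,$$ $$T_0=\begin{cases}\max\{T_1,T_2\}&\text{if } w^*_b\ne\tfrac12,\\ 4\sum_{i\in\mathcal{K}'}I_i\log\frac{I_{\max}}{I_i}-S&\text{if } w^*_b=\tfrac12.\end{cases}$$ If $T\ge T_0$, then $W_i(T)\ge0$ for all $i\in\mathcal{K}$.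
   Context: Let $k\ge 2$ and $\mathcal{K}=\{1,\dots,k\}$. For each $i\in\mathcal{K}$ fix real numbers $\mu_i$ and $\sigma_i>0$. Let $b\in\mathcal{K}$ be the unique index with $\mu_b<\mu_i$ for all $i\neq b$, and let $\mathcal{K}'=\mathcal{K}\setminus\{b\}$. For $i\in\mathcal{K}'$ put $\delta_{i,b}=\mu_i-\mu_b>0$ and $I_i=\sigma_i^2/\delta_{i,b}^2$; put $I_b=\sigma_b\sqrt{\sum_{i\in\mathcal{K}'}I_i^2/\sigma_i^2}$, $S=\sum_{i\in\mathcal{K}}I_i$, and $w^*_i=I_i/S$ for $i\in\mathcal{K}$. Define $p=S(2I_b-S)$, $q=-4\sigma_b^2\sum_{i\in\mathcal{K}'}\frac{I_i^2\log I_i}{\sigma_i^2}+2(S-I_b)\big(2\sum_{i\in\mathcal{K}'}I_i\log I_i+T+S\big)$, $r=4\sigma_b^2\sum_{i\in\mathcal{K}'}\frac{I_i^2\log^2I_i}{\sigma_i^2}-\big(2\sum_{i\in\mathcal{K}'}I_i\log I_i+T+S\big)^2$. *)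

(* Defs.v *)
From mathcomp Require Import all_boot all_order all_algebra.
From mathcomp Require Import reals exp.
Set Implicit Arguments. Unset Strict Implicit. Unset Printing Implicit Defensive.
Import Order.TTheory GRing.Theory Num.Theory.
Local Open Scope ring_scope.

Section Defs.
Variable R : realType.
Variable k : nat.
Variables (mu sigma : 'I_k -> R) (b : 'I_k).

Definition delta (i : 'I_k) : R := mu i - mu b.
Definition Ia (i : 'I_k) : R := sigma i ^+ 2 / delta i ^+ 2.
Definition Ib : R :=
  sigma b * Num.sqrt (\sum_(i < k | i != b) Ia i ^+ 2 / sigma i ^+ 2).
Definition II (i : 'I_k) : R := if i == b then Ib else Ia i.
Definition SS : R := \sum_(i < k) II i.
Definition wstar (i : 'I_k) : R := II i / SS.

Definition pp : R := SS * (2 * Ib - SS).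
Definition Aux (T : R) : R :=
  2 * (\sum_(i < k | i != b) II i * ln (II i)) + T + SS.
Definition qq (T : R) : R :=
  - 4 * sigma b ^+ 2 * (\sum_(i < k | i != b) II i ^+ 2 * ln (II i) / sigma i ^+ 2)
  + 2 * (SS - Ib) * Aux T.
Definition rr (T : R) : R :=
  4 * sigma b ^+ 2 * (\sum_(i < k | i != b) II i ^+ 2 * ln (II i) ^+ 2 / sigma i ^+ 2)
  - Aux T ^+ 2.

Definition lambda (T : R) : R :=
  if wstar b != 2^-1 then
    (- qq T + Num.sqrt (qq T ^+ 2 - 4 * pp * rr T)) / (2 * pp)
  else
    (4 * (\sum_(i < k | i != b) II i * ln (II i)) + T + SS)
      / (2 * (\sum_(i < k | i != b) II i)).

Definition Wa (T : R) (i : 'I_k) : R :=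
  wstar i * (lambda T - 2 * ln (II i)) / (1 + T / SS).
Definition W (T : R) (i : 'I_k) : R :=
  if i == b then sigma b * Num.sqrt (\sum_(j < k | j != b) Wa T j ^+ 2 / sigma j ^+ 2)
  else Wa T i.

(* I_max = max_{i in K'} I_i  (all I_i > 0, so 0 is a neutral seed) *)
Definition Imax : R := \big[Num.max/0]_(i < k | i != b) II i.

Definition T1 : R :=
  2 * (\sum_(i < k | i != b)
         (sigma b ^+ 2 * II i ^+ 2 / (sigma i ^+ 2 * (SS - Ib)) - II i)
         * ln (Imax / II i)) - SS.
Definition T2 : R :=
  2 * (\sum_(i < k | i != b) II i * ln (Imax / II i))
  + 2 * sigma b * Num.sqrt (\sum_(i < k | i != b)
                              II i ^+ 2 / sigma i ^+ 2 * ln (Imax / II i) ^+ 2)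
  - SS.
Definition T0 : R :=
  if wstar b != 2^-1 then Num.max T1 T2
  else 4 * (\sum_(i < k | i != b) II i * ln (Imax / II i)) - SS.

End Defs.

(* Main.v *)
Require Import Defs.
From mathcomp Require Import all_boot all_order all_algebra.
From mathcomp Require Import reals exp.
From mathcomp Require Import ring lra.
Import Order.TTheory GRing.Theory Num.Theory.
Local Open Scope ring_scope.

Lemma root_ge (R : realFieldType) (p q r s L : R) :
  p != 0 -> 0 <= s -> s ^+ 2 = q ^+ 2 - 4 * p * r ->
  p * L ^+ 2 + q * L + r <= 0 -> 0 <= 2 * p * L + q ->
  L <= (- q + s) / (2 * p).
Proof.
move=> p0 s0 sE fL dL.
have key : (2 * p * L + q) ^+ 2 = s ^+ 2 + 4 * p * (p * L ^+ 2 + q * L + r).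
  rewrite sE; ring.
case: (ltgtP p 0) => hp; last by rewrite hp eqxx in p0.
- rewrite ler_ndivlMr; last by lra.
  have h1 : 0 <= 4 * p * (p * L ^+ 2 + q * L + r) by nra.
  suff : s <= 2 * p * L + q by lra.
  nra.
- rewrite ler_pdivlMr; last by lra.
  have h1 : 4 * p * (p * L ^+ 2 + q * L + r) <= 0 by nra.
  suff : 2 * p * L + q <= s by lra.
  nra.
Qed.

Theorem lemma3 (R : realType) (k : nat) (mu sigma : 'I_k -> R) (b : 'I_k)
  (T : R) :
  (2 <= k)%N ->
  (forall i, 0 < sigma i) ->
  (forall i, i != b -> mu b < mu i) ->
  0 < T ->
  (wstar mu sigma b b != 2^-1 ->
     0 <= qq mu sigma b T ^+ 2 - 4 * pp mu sigma b * rr mu sigma b T) ->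
  T0 mu sigma b <= T ->
  forall i : 'I_k, 0 <= W mu sigma b T i.
Proof.
move=> k2 sg mub Tpos Dh T0le.
have Ipos : forall j, j != b -> 0 < II mu sigma b j.
  move=> j hj; rewrite /II (negbTE hj) /Ia /delta.
  have := mub j hj; have := sg j => h1 h2.
  apply: divr_gt0; apply: exprn_gt0 => //; lra.
have [j0 hj0] : exists j0 : 'I_k, j0 != b.
  have h0 : (0 < k)%N by apply: leq_trans k2.
  pose o0 : 'I_k := Ordinal h0.
  pose o1 : 'I_k := Ordinal k2.
  case: (eqVneq b o0) => hb; last by exists o0; rewrite eq_sym.
  by exists o1; rewrite hb.
set P := \sum_(i < k | i != b) II mu sigma b i.
have Ppos : 0 < P.
  rewrite /P (bigD1 j0) //=.
  have : 0 <= \sum_(i < k | (i != b) && (i != j0)) II mu sigma b i.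
    by apply: sumr_ge0 => j /andP [hj _]; apply/ltW/Ipos.
  have := Ipos j0 hj0; lra.
set B2 := \sum_(i < k | i != b) II mu sigma b i ^+ 2 / sigma i ^+ 2.
have B2ge : 0 <= B2.
  apply: sumr_ge0 => j _; apply: divr_ge0; apply: sqr_ge0.
have IbE : Ib mu sigma b = sigma b * Num.sqrt B2.
  rewrite /Ib /B2; congr (_ * Num.sqrt _); apply: eq_bigr => j hj.
  by rewrite /II (negbTE hj).
have Ibge : 0 <= Ib mu sigma b.
  by rewrite IbE; apply: mulr_ge0; [apply/ltW/sg | apply: sqrtr_ge0].
have Ib2 : Ib mu sigma b ^+ 2 = sigma b ^+ 2 * B2.
  by rewrite IbE exprMn sqr_sqrtr.
have SSE : SS mu sigma b = Ib mu sigma b + P.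
  by rewrite /SS (bigD1 b) //= /II eqxx.
set M := ln (Imax mu sigma b).
have Imax_ge : forall j, j != b -> II mu sigma b j <= Imax mu sigma b.
  move=> j hj; rewrite /Imax (bigD1 j) //=.
  by rewrite le_max lexx.
have Imax_pos : 0 < Imax mu sigma b.
  exact: lt_le_trans (Ipos j0 hj0) (Imax_ge j0 hj0).
have lnle : forall j, j != b -> ln (II mu sigma b j) <= M.
  move=> j hj; rewrite /M ler_ln ?posrE ?Ipos //; exact: Imax_ge.
have lnE : forall j, j != b ->
    ln (Imax mu sigma b / II mu sigma b j) = M - ln (II mu sigma b j).
  by move=> j hj; rewrite ln_div ?posrE ?Ipos.
set Q := \sum_(i < k | i != b) II mu sigma b i * ln (II mu sigma b i).
set C := \sum_(i < k | i != b) II mu sigma b i ^+ 2 * ln (II mu sigma b i) / sigma i ^+ 2.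
set E := \sum_(i < k | i != b) II mu sigma b i ^+ 2 * ln (II mu sigma b i) ^+ 2 / sigma i ^+ 2.
have S1 : \sum_(i < k | i != b) II mu sigma b i * ln (Imax mu sigma b / II mu sigma b i)
    = M * P - Q.
  rewrite /P /Q mulr_sumr -sumrB; apply: eq_bigr => j hj; rewrite lnE //; ring.
have S2 : \sum_(i < k | i != b) II mu sigma b i ^+ 2 / sigma i ^+ 2
            * ln (Imax mu sigma b / II mu sigma b i) ^+ 2
    = M ^+ 2 * B2 - 2 * M * C + E.
  rewrite /B2 /C /E !mulr_sumr -sumrB -big_split; apply: eq_bigr => j hj.
  rewrite /= lnE //; have := sg j => h; field; lra.
have S3 : 0 <= M * B2 - C.
  have -> : M * B2 - C = \sum_(i < k | i != b) II mu sigma b i ^+ 2 / sigma i ^+ 2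
            * (M - ln (II mu sigma b i)).
    rewrite /B2 /C mulr_sumr -sumrB; apply: eq_bigr => j hj.
    have := sg j => h; field; lra.
  apply: sumr_ge0 => j hj; apply: mulr_ge0.
    apply: divr_ge0; apply: sqr_ge0.
  have := lnle j hj; lra.
have lamge : 2 * M <= lambda mu sigma b T.
  rewrite /lambda; case: ifP => hw.
  - move: T0le; rewrite /T0 hw ge_max => /andP [_ hT2].
    move: hT2; rewrite /T2 S1 S2 => hT2.
    set X := M ^+ 2 * B2 - 2 * M * C + E in hT2.
    have Xge : 0 <= X by rewrite /X -S2; apply: sumr_ge0 => j hj;
      apply: mulr_ge0; [apply: divr_ge0; apply: sqr_ge0 | apply: sqr_ge0].
    have sxge := sqrtr_ge0 X.
    have sx2 := sqr_sqrtr Xge.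
    set sx := Num.sqrt X in hT2 sxge sx2.
    have sgb := sg b.
    set g := T + SS mu sigma b - 2 * (M * P - Q).
    have gge : 2 * sigma b * sx <= g by rewrite /g; lra.
    have g2 : 4 * sigma b ^+ 2 * X <= g ^+ 2.
      have h0 : 0 <= 2 * sigma b * sx by apply: mulr_ge0 => //; lra.
      have : (2 * sigma b * sx) ^+ 2 <= g ^+ 2 by nra.
      have e : (2 * sigma b * sx) ^+ 2 = 4 * sigma b ^+ 2 * X.
        by rewrite !exprMn sx2; ring.
      by rewrite e.
    have SSpos : 0 < SS mu sigma b by rewrite SSE; lra.
    have ppne : pp mu sigma b != 0.
      rewrite /pp mulf_neq0 //; first by rewrite gt_eqF.
      apply: contra hw => /eqP h.
      rewrite /wstar /II eqxx; apply/eqP.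
      have -> : Ib mu sigma b = SS mu sigma b / 2 by lra.
      by field; rewrite gt_eqF.
    apply: root_ge => //; first exact: sqrtr_ge0.
      exact: sqr_sqrtr (Dh hw).
    + have -> : pp mu sigma b * (2 * M) ^+ 2 + qq mu sigma b T * (2 * M) + rr mu sigma b T
          = 4 * sigma b ^+ 2 * X - g ^+ 2
            + 4 * M ^+ 2 * (Ib mu sigma b ^+ 2 - sigma b ^+ 2 * B2).
        rewrite /pp /qq /rr /Aux -/C -/Q -/E /X /g SSE; ring.
      rewrite Ib2 subrr mulr0 addr0; lra.
    + have -> : 2 * pp mu sigma b * (2 * M) + qq mu sigma b T
          = 4 * sigma b ^+ 2 * (M * B2 - C) + 2 * P * g
            + 4 * M * (Ib mu sigma b ^+ 2 - sigma b ^+ 2 * B2).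
        rewrite /pp /qq /Aux -/C -/Q /g SSE; ring.
      rewrite Ib2 subrr mulr0 addr0.
      have h0 : 0 <= 2 * sigma b * sx by apply: mulr_ge0 => //; lra.
      have g0 : 0 <= g by lra.
      have : 0 <= sigma b ^+ 2 * (M * B2 - C) by apply: mulr_ge0 => //; apply: sqr_ge0.
      have : 0 <= P * g by apply: mulr_ge0 => //; lra.
      lra.
  - move: T0le; rewrite /T0 hw /= S1 => hT.
    rewrite -/Q -/P ler_pdivlMr; last by lra.
    lra.
move=> i; rewrite /W; case: ifP => [_|/negbT hi].
  by apply: mulr_ge0; [apply/ltW/sg | apply: sqrtr_ge0].
rewrite /Wa /wstar.
have SSpos : 0 < SS mu sigma b by rewrite SSE; lra.
have := lnle i hi; have := Ipos i hi => h1 h2.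
apply: divr_ge0; last first.
  have : 0 < T / SS mu sigma b by apply: divr_gt0.
  lra.
apply: mulr_ge0; first by apply: divr_ge0; lra.
lra.
Qed.
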